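(* For every $n\geq1$, $$\sum_{\sigma\in\mathfrak S_n}(xy)^{{\rm M}(\sigma)}\Bigl(\frac{x+y}{2}\Bigr)^{n-2{\rm M}(\sigma)-1}\alpha^{{\rm LRmin}(\sigma)-1}\beta^{{\rm RLmin}(\sigma)-1}=\sum_{\sigma\in\mathfrak S_n}x^{{\rm des}(\sigma)}y^{n-{\rm des}(\sigma)-1}\Bigl(\frac{\alpha+\beta}{2}\Bigr)^{{\rm LRmin}(\sigma)+{\rm RLmin}(\sigma)-2}.$$
   Context: For $\sigma=\sigma_1\cdots\sigma_n\in\mathfrak S_n$: ${\rm des}(\sigma)$ is the number of $i\in[n-1]$ with $\sigma_i>\sigma_{i+1}$; ${\rm M}(\sigma)$ is the number of $i$ with $1<i<n$ and $\sigma_{i-1}<\sigma_i>\sigma_{i+1}$; ${\rm LRmin}(\sigma)$ is the number of $i$ with $\sigma_j>\sigma_i$ for all $j<i$; ${\rm RLmin}(\sigma)$ is the number of $i$ with $\sigma_j>\sigma_i$ for all $j>i$. Here $x,y,\alpha,\beta$ are indeterminates. *)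

(* Defs.v *)
From HB Require Import structures.
From mathcomp Require Import all_boot all_order all_algebra all_fingroup.
Set Implicit Arguments. Unset Strict Implicit. Unset Printing Implicit Defensive.

(* One-line notation of sigma in S_n (positions 0..n-1, values 0..n-1):
   w = [:: sigma_1; ...; sigma_n] shifted to 0-based values. *)
Definition pword n (s : 'S_n) : seq nat := [seq val (s i) | i <- enum 'I_n].

Definition des n (s : 'S_n) : nat :=
  let w := pword s in
  count (fun i => nth 0 w i.+1 < nth 0 w i)%N (iota 0 n.-1).

Definition peak n (s : 'S_n) : nat :=
  let w := pword s in
  count (fun i => (nth 0 w i < nth 0 w i.+1) && (nth 0 w i.+2 < nth 0 w i.+1))%N
        (iota 0 (n - 2)).

Definition LRmin n (s : 'S_n) : nat :=
  let w := pword s in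
  count (fun i => all (fun j => nth 0 w i < nth 0 w j)%N (iota 0 i)) (iota 0 n).

Definition RLmin n (s : 'S_n) : nat :=
  let w := pword s in
  count (fun i => all (fun j => nth 0 w i < nth 0 w j)%N (iota i.+1 (n - i.+1)))
        (iota 0 n).

(* Main.v *)
Require Import Defs.
From HB Require Import structures.
From mathcomp Require Import all_boot all_order all_algebra all_fingroup.
From mathcomp Require Import zify ring.
Set Implicit Arguments. Unset Strict Implicit. Unset Printing Implicit Defensive.

Definition desD (w : seq nat) :=
  count (fun i => nth 0 w i.+1 < nth 0 w i) (iota 0 (size w).-1).
Definition pkD (w : seq nat) :=
  count (fun i => (nth 0 w i < nth 0 w i.+1) && (nth 0 w i.+2 < nth 0 w i.+1))
        (iota 0 (size w - 2)).
Definition lrD (w : seq nat) :=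
  count (fun i => all (fun j => nth 0 w i < nth 0 w j) (iota 0 i)) (iota 0 (size w)).
Definition rlD (w : seq nat) :=
  count (fun i => all (fun j => nth 0 w i < nth 0 w j) (iota i.+1 (size w - i.+1)))
        (iota 0 (size w)).
Definition lrf (m : nat) (w : seq nat) :=
  count (fun i => (nth 0 w i < m) && all (fun j => nth 0 w i < nth 0 w j) (iota 0 i))
        (iota 0 (size w)).

Lemma iota1 n : iota 1 n = map S (iota 0 n).
Proof. exact: (iotaDl 1 0 n). Qed.
Lemma iota0S n : iota 0 n.+1 = 0 :: map S (iota 0 n).
Proof. by rewrite /= iota1. Qed.

Lemma desD_cons2 x y t : desD [:: x, y & t] = (y < x) + desD (y :: t).
Proof. by rewrite /desD /= iota1 count_map. Qed.
Lemma desD1 x : desD [:: x] = 0. Proof. by []. Qed.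

Definition headpk z (s : seq nat) :=
  if s is b :: c :: _ then (z < b) && (c < b) else false.

Lemma pkD_cons x s : pkD (x :: s) = headpk x s + pkD s.
Proof.
case: s => [|y [|z t]] //.
by rewrite /pkD /= iota1 count_map subn2.
Qed.

Lemma lrD_cons x t : lrD (x :: t) = 1 + lrf x t.
Proof.
rewrite /lrD /lrf /= iota1 count_map; congr (_ + _).
apply: eq_count => i /=; by rewrite iota1 all_map.
Qed.

Lemma lrf_cons m y t : lrf m (y :: t) = (y < m) + lrf (minn m y) t.
Proof.
rewrite /lrf /= iota1 count_map andbT; congr (_ + _).
apply: eq_count => i /=; rewrite iota1 all_map leq_min andbA //.
Qed.

Lemma rlD_cons x t : rlD (x :: t) = all (fun z => x < z) t + rlD t.
Proof.
rewrite /rlD /= [iota 1 (size t)]iota1 count_map subn1 /=; congr (_ + _).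
  by rewrite iota1 all_map -[in RHS](mkseq_nth 0 t) /mkseq all_map.
apply: eq_count => i /=; rewrite subSS -(add1n i.+1) iotaDl all_map //.
Qed.

Fixpoint lastpk (u : seq nat) (y : nat) : bool :=
  match u with
  | a :: u' => match u' with
               | [::] => false
               | b :: t => if t is [::] then (a < b) && (y < b) else lastpk u' y
               end
  | [::] => false
  end.

Lemma desD_cat u y v :
  desD (u ++ y :: v) = desD u + ((u != [::]) && (y < last 0 u)) + desD (y :: v).
Proof.
elim: u => [|a u IH] //=.
case: u IH => [|b t] IH /=; first by rewrite desD_cons2.
by rewrite !desD_cons2 IH /= !addnA.
Qed.

Lemma pkD_cat u y v :
  pkD (u ++ y :: v) =
  pkD u + lastpk u y + ((u != [::]) && headpk (last 0 u) (y :: v)) + pkD (y :: v).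
Proof.
elim: u => [|a u IH] //=.
case: u IH => [|b t] IH /=; first by rewrite pkD_cons.
rewrite pkD_cons IH [pkD [:: a, b & t]]pkD_cons /=.
case: t IH => [|c t] IH /=; first by rewrite /pkD /=; lia.
lia.
Qed.

Lemma last_mem0 (u : seq nat) : u != [::] -> last 0 u \in u.
Proof. by case: u => // a u _; exact: mem_last. Qed.

Lemma lastpk_lt u y : lastpk u y -> y < last 0 u.
Proof.
elim: u => [|a u IH] //=.
case: u IH => [|b t] IH //=.
case: t IH => [|c t] IH /=; first by case/andP.
by move/IH.
Qed.

Lemma lastu_lt n u v : all (fun z => z < n) (u ++ v) -> u != [::] -> last 0 u < n.
Proof.
move=> Hall /last_mem0 H; move/allP: Hall; apply; by rewrite mem_cat H.
Qed.

Lemma headv_lt n u v : all (fun z => z < n) (u ++ v) -> v != [::] -> head 0 v < n.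
Proof.
case: v => // b t; rewrite all_cat /= => /andP[_ /andP[]] //.
Qed.

Lemma nlastu n u v : all (fun z => z < n) (u ++ v) ->
  ((u != [::]) && (n < last 0 u)) = false.
Proof.
move=> Hall; case: (u =P [::]) => //= /eqP /(lastu_lt Hall) H; apply/negbTE.
rewrite -leqNgt; exact: ltnW.
Qed.

Lemma ins_des n u v : all (fun z => z < n) (u ++ v) ->
  desD (u ++ n :: v) = desD u + (v != [::]) + desD v.
Proof.
move=> Hall; rewrite desD_cat (nlastu Hall).
move: Hall; case: v => [|b t] Hall //.
rewrite desD_cons2 (headv_lt Hall isT) /=; lia.
Qed.

Lemma ins_pk n u v : all (fun z => z < n) (u ++ v) ->
  pkD (u ++ n :: v) = pkD u + ((u != [::]) && (v != [::])) + pkD v.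
Proof.
move=> Hall; rewrite pkD_cat.
have -> : lastpk u n = false.
  apply/negbTE/negP => /lastpk_lt H.
  have Hu : u != [::] by apply/eqP => E; rewrite E in H.
  have := lastu_lt Hall Hu; lia.
rewrite pkD_cons.
move: Hall; case: v => [|b t] Hall; first by rewrite andbF /=; lia.
have Hb := headv_lt Hall isT; rewrite /= in Hb.
have -> : headpk n (b :: t) = false.
  by case: t Hall => //= c t _; apply/negbTE; rewrite negb_and -leqNgt ltnW.
rewrite /= Hb andbT.
case: (u =P [::]) => [->|/eqP Hu] /=; first by lia.
rewrite (lastu_lt Hall Hu) /=; lia.
Qed.

Lemma lrf_ins m n u v : m <= n -> all (fun z => z < n) u ->
  lrf m (u ++ n :: v) = lrf m (u ++ v).
Proof.
elim: u m => [|a u IH] m Hm /=.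
  by rewrite lrf_cons ltnNge Hm /= (minn_idPl Hm).
case/andP => Ha Hu; rewrite !lrf_cons IH //.
by rewrite geq_min Hm.
Qed.

Lemma ins_lr n u v : all (fun z => z < n) (u ++ v) ->
  lrD (u ++ n :: v) = lrD (u ++ v) + (u == [::]).
Proof.
case: u => [|a u] /=.
  case: v => [|b t] //= /andP[Hb _].
  by rewrite !lrD_cons lrf_cons Hb (minn_idPr (ltnW Hb)) addn1.
case/andP=> Ha; rewrite all_cat => /andP[Hu _].
by rewrite !lrD_cons lrf_ins ?addn0 // ltnW.
Qed.

Lemma ins_rl n u v : all (fun z => z < n) (u ++ v) ->
  rlD (u ++ n :: v) = rlD (u ++ v) + (v == [::]).
Proof.
elim: u => [|a u IH] /=.
  move=> Hv; rewrite rlD_cons addnC; congr (_ + _); case: v Hv => [|b t] //= /andP[Hb _].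
  by rewrite ltnNge (ltnW Hb).
case/andP=> Ha Huv; rewrite !rlD_cons IH // !all_cat /= Ha.
by rewrite addnA.
Qed.

Section ISum.
Variables (T : Type) (idx : T) (op : Monoid.law idx).

Definition isum (G : seq nat -> seq nat -> T) (w : seq nat) :=
  \big[op/idx]_(k <- iota 1 (size w).-1) G (take k w) (drop k w).

Lemma isum_cons G x y t :
  isum G [:: x, y & t] = op (G [:: x] (y :: t)) (isum (fun u v => G (x :: u) v) (y :: t)).
Proof.
by rewrite /isum /= big_cons -[2]/(1 + 1) iotaDl big_map.
Qed.

Lemma isum_ext G G' w :
  (forall u v, u != [::] -> v != [::] -> u ++ v = w -> G u v = G' u v) -> isum G w = isum G' w.
Proof.
move=> H; rewrite /isum !big_seq; apply: eq_bigr => k; rewrite mem_iota => /andP[k1 k2].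
have Hs : k < size w by move: k2; case: (size w) => //=; lia.
apply: H; rewrite ?cat_take_drop // -size_eq0 ?size_take_min ?size_drop -lt0n ?subn_gt0 // leq_min k1 (leq_trans _ Hs) // ltnW.
Qed.

Lemma isum_all G w : w != [::] ->
  \big[op/idx]_(k <- iota 0 (size w).+1) G (take k w) (drop k w) =
  op (G [::] w) (op (isum G w) (G w [::])).
Proof.
move=> Hw; rewrite /isum /= big_cons drop0 take0; congr (op _ _).
have Em : size w = (size w).-1.+1 by case: (w) Hw.
rewrite [in iota 1 _]Em -[(size w).-1.+1]addn1 iotaD big_cat /= big_cons big_nil Monoid.mulm1.
by rewrite add1n -Em take_size drop_size.
Qed.
End ISum.

Notation nsum := (@isum nat 0 addn).

Lemma jdes w : nsum (fun u v => head 0 v < last 0 u) w = desD w.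
Proof.
elim: w => [|x w IH]; first by rewrite /isum big_nil.
case: w IH => [|y t] IH; first by rewrite /isum big_nil.
rewrite isum_cons desD_cons2 -IH; congr (_ + _).
apply: isum_ext => u v Hu _ _; by case: u Hu.
Qed.

Lemma jpkh w : nsum (fun u v => headpk (last 0 u) v) w = pkD w.
Proof.
elim: w => [|x w IH]; first by rewrite /isum big_nil.
case: w IH => [|y t] IH; first by rewrite /isum big_nil.
rewrite isum_cons pkD_cons -IH; congr (_ + _).
apply: isum_ext => u v Hu _ _; by case: u Hu.
Qed.

Lemma jpkl w : nsum (fun u v => lastpk u (head 0 v)) w = pkD w.
Proof.
elim: w => [|x w IH]; first by rewrite /isum big_nil.
case: w IH => [|y t] IH; first by rewrite /isum big_nil.
case: t IH => [|z t] IH; first by rewrite /isum /= big_cons big_nil.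
rewrite isum_cons isum_cons pkD_cons -IH isum_cons /= add0n; congr (_ + _).
apply: isum_ext => u v Hu _ _; by case: u Hu.
Qed.

Definition Pn n := permutations (iota 0 n).

Lemma perm_iota w n : uniq w -> all (fun z => z < n) w -> size w = n ->
  perm_eq w (iota 0 n).
Proof.
move=> Uw Aw Sw.
have Hsub : {subset w <= iota 0 n}.
  by move=> z Hz; rewrite mem_iota /=; move/allP: Aw => /(_ z Hz).
have [_ E] := uniq_min_size Uw Hsub (eq_leq (etrans (size_iota 0 n) (esym Sw))).
by apply: uniq_perm => //; apply: iota_uniq.
Qed.

Lemma Pn_prop n w : w \in Pn n ->
  [/\ uniq w, all (fun z => z < n) w & size w = n].
Proof.
rewrite mem_permutations => H; split.
- by rewrite (perm_uniq H) iota_uniq.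
- by apply/allP => z; rewrite (perm_mem H) mem_iota.
- by rewrite (perm_size H) size_iota.
Qed.

Lemma size_pword n (s : 'S_n) : size (pword s) = n.
Proof. by rewrite /pword size_map size_enum_ord. Qed.

Lemma nth_pword n (s : 'S_n) (i : 'I_n) : nth 0 (pword s) i = s i.
Proof.
by rewrite /pword (nth_map i) ?size_enum_ord ?ltn_ord // nth_ord_enum.
Qed.

Lemma pword_inj n : injective (@pword n).
Proof.
move=> s t E; apply/permP => i; apply: val_inj.
by rewrite /= -!nth_pword E.
Qed.

Lemma pword_uniq n (s : 'S_n) : uniq (pword s).
Proof.
rewrite /pword (map_inj_uniq (f := fun i => val (s i))) ?enum_uniq //.
by move=> i j /val_inj /perm_inj.
Qed.

Lemma pword_in n (s : 'S_n) : pword s \in Pn n.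
Proof.
rewrite /Pn mem_permutations; apply: perm_iota; rewrite ?pword_uniq ?size_pword //.
by apply/allP => z /mapP [i _ ->]; apply: ltn_ord.
Qed.

Lemma perm_Sn n : perm_eq [seq pword s | s <- enum 'S_n] (Pn n).
Proof.
have U1 : uniq [seq pword s | s <- enum 'S_n].
  by rewrite map_inj_uniq ?enum_uniq //; apply: pword_inj.
have Hsub : {subset [seq pword s | s <- enum 'S_n] <= Pn n}.
  by move=> z /mapP [s _ ->]; apply: pword_in.
have Hsz : size (Pn n) <= size [seq pword s | s <- enum 'S_n].
  by rewrite size_map -cardE card_Sn size_permutations ?iota_uniq // size_iota.
have [_ E] := uniq_min_size U1 Hsub Hsz.
by apply: uniq_perm => //; apply: permutations_uniq.
Qed.

Lemma sum_Sn (T : Type) (idx : T) (op : Monoid.com_law idx) n (F : seq nat -> T) :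
  \big[op/idx]_(s : 'S_n) F (pword s) = \big[op/idx]_(w <- Pn n) F w.
Proof.
by rewrite -(perm_big _ (perm_Sn n)) big_map big_enum.
Qed.

Definition insl n (w : seq nat) := [seq take k w ++ n :: drop k w | k <- iota 0 n.+1].

Lemma iotaSr0 n : iota 0 n.+1 = rcons (iota 0 n) n.
Proof. by rewrite -addn1 iotaD cats1. Qed.

Lemma perm_ins n u v : perm_eq (u ++ n :: v) (iota 0 n.+1) = perm_eq (u ++ v) (iota 0 n).
Proof.
rewrite (perm_catCA u [:: n] v) iotaSr0.
apply/idP/idP => H.
  by rewrite -(perm_cons n) (perm_trans H) // perm_rcons.
by rewrite perm_sym perm_rcons perm_cons perm_sym.
Qed.

Lemma map_const (T1 T2 : Type) (c : T2) (s : seq T1) : map (fun _ => c) s = nseq (size s) c.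
Proof. by elim: s => //= a s ->. Qed.

Lemma Pn_rec n : perm_eq (Pn n.+1) (flatten [seq insl n w | w <- Pn n]).
Proof.
set L := flatten _.
have U1 : uniq (Pn n.+1) by apply: permutations_uniq.
have Hsub : {subset Pn n.+1 <= L}.
  move=> w'; rewrite /Pn mem_permutations => Hw'.
  have Hn : n \in w' by rewrite (perm_mem Hw') mem_iota /= add0n ltnSn.
  set i := index n w'.
  have Hi : i < size w' by rewrite index_mem.
  have E : w' = take i w' ++ n :: drop i.+1 w'.
    by rewrite -{1}(cat_take_drop i w') (drop_nth 0) // nth_index.
  have Si : size (take i w') = i by rewrite size_takel // ltnW.
  apply/flatten_mapP; exists (take i w' ++ drop i.+1 w').
    by rewrite /Pn mem_permutations -perm_ins -E.
  apply/mapP; exists i.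
    by rewrite mem_iota /= add0n -[n.+1](size_iota 0 n.+1) -(perm_size Hw').
  by rewrite take_size_cat // drop_size_cat.
have Hsz : size L <= size (Pn n.+1).
  rewrite size_flatten /shape -map_comp.
  rewrite (eq_map (g := fun _ => n.+1)); last by move=> w /=; rewrite size_map size_iota.
  rewrite map_const sumn_nseq /Pn !size_permutations ?iota_uniq // !size_iota.
  by rewrite factS mulnC.
have [Es Ei] := uniq_min_size U1 Hsub Hsz.
apply: uniq_perm => //.
by rewrite (uniq_size_uniq U1 Ei) Es.
Qed.

Lemma sum_Pn_rec (T : Type) (idx : T) (op : Monoid.com_law idx) n (F : seq nat -> T) :
  \big[op/idx]_(w <- Pn n.+1) F w =
  \big[op/idx]_(w <- Pn n) \big[op/idx]_(k <- iota 0 n.+1) F (take k w ++ n :: drop k w).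
Proof.
rewrite (perm_big _ (Pn_rec n)) big_flatten big_map; apply: eq_bigr => w _.
by rewrite big_map.
Qed.

Import GRing.Theory Num.Theory.

Lemma sum_count (s : seq nat) (P : pred nat) : \sum_(k <- s) (P k : nat) = count P s.
Proof. by elim: s => [|k s IH]; rewrite ?big_nil ?big_cons //= IH. Qed.

Lemma nsum_count (J : seq nat -> seq nat -> bool) w :
  nsum J w = count (fun k => J (take k w) (drop k w)) (iota 1 (size w).-1).
Proof. by rewrite /isum sum_count. Qed.

Lemma nsum_le (J : seq nat -> seq nat -> bool) w : nsum J w <= (size w).-1.
Proof. by rewrite nsum_count (leq_trans (count_size _ _)) // size_iota. Qed.

Local Open Scope ring_scope.

Lemma sum_if (R : comNzRingType) (s : seq nat) (P : pred nat) (A B : R) :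
  \sum_(k <- s) (if P k then A else B) =
  (count P s)%:R * A + (size s - count P s)%:R * B.
Proof.
elim: s => [|k s IH]; first by rewrite big_nil !mul0r addr0.
rewrite big_cons IH /=; case: (P k) => /=.
  by rewrite subSS natrD; ring.
by rewrite add0n subSn ?count_size // -addn1 natrD; ring.
Qed.

Lemma isum_if (R : comNzRingType) (J : seq nat -> seq nat -> bool) (A B : R) w :
  @isum R 0 +%R (fun u v => if J u v then A else B) w =
  (nsum J w)%:R * A + ((size w).-1 - nsum J w)%:R * B.
Proof. by rewrite nsum_count /isum sum_if size_iota. Qed.

Lemma lrD_gt0 w : w != [::] -> (0 < lrD w)%N.
Proof. by case: w => // x t _; rewrite lrD_cons. Qed.

Lemma rlD_gt0 w : w != [::] -> (0 < rlD w)%N.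
Proof.
elim: w => // x t IH _; rewrite rlD_cons.
case: t IH => [|z t] IH; first by [].
by rewrite (leq_trans (IH isT)) // leq_addl.
Qed.

Lemma headpk_lt z y v : headpk z (y :: v) -> (z < y)%N.
Proof. by case: v => //= c v /andP[]. Qed.

Lemma nsum_pk w :
  nsum (fun u v => lastpk u (head 0 v) || headpk (last 0 u) v) w = (2 * pkD w)%N.
Proof.
rewrite mul2n -addnn -{1}(jpkl w) -(jpkh w).
have -> : nsum (fun u v => lastpk u (head 0 v) || headpk (last 0 u) v) w =
          nsum (fun u v => (lastpk u (head 0 v) : nat) + headpk (last 0 u) v)%N w.
  apply: isum_ext => u v _ Hv _.
  case: v Hv => // y v _.
  case H1 : (lastpk u y); case H2 : (headpk (last 0 u) (y :: v)) => //=.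
  by have := ltn_trans (headpk_lt H2) (lastpk_lt H1); rewrite ltnn.
by rewrite /isum big_split.
Qed.

Section Slots.
Variable R : numFieldType.

Definition Lw (x y h a b : R) (w : seq nat) :=
  (x * y) ^+ pkD w * h ^+ (size w - 2 * pkD w - 1) * a ^+ (lrD w - 1) * b ^+ (rlD w - 1).
Definition Rw (x y c : R) (w : seq nat) :=
  x ^+ desD w * y ^+ (size w - desD w - 1) * c ^+ (lrD w + rlD w - 2).

Lemma slotL n w (x y h a b : R) : w \in Pn n -> (0 < n)%N ->
  \sum_(k <- iota 0 n.+1) Lw x y h a b (take k w ++ n :: drop k w) =
  h * (a + b) * Lw x y h a b w + (2 * pkD w)%:R * (h * Lw x y h a b w) +
  (n.-1 - 2 * pkD w)%:R * ((x * y) ^+ (pkD w).+1 * h ^+ (n - 2 * pkD w - 2) *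
                            a ^+ (lrD w - 1) * b ^+ (rlD w - 1)).
Proof.
move=> Hw n0; have [Uw Aw Sw] := Pn_prop Hw.
have Hw0 : w != [::] by rewrite -size_eq0 Sw -lt0n.
have Hp : (2 * pkD w <= n.-1)%N.
  by rewrite -nsum_pk -Sw; apply: nsum_le.
have Hlr := lrD_gt0 Hw0; have Hrl := rlD_gt0 Hw0.
rewrite -[in iota 0 n.+1]Sw (isum_all _ (fun u v => Lw x y h a b (u ++ n :: v)) Hw0).
set Y := (_ * _ * _ * _)%R.
rewrite (@isum_ext _ _ _ _ (fun u v => if lastpk u (head 0 v) || headpk (last 0 u) v
                                     then h * Lw x y h a b w else Y) w); last first.
  move=> u v Hu Hv Euv.
  have Auv : all (fun z => z < n)%N (u ++ v) by rewrite Euv.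
  case: v Hv Euv Auv => // y0 v _ Euv Auv; rewrite -[head 0 (y0 :: v)]/y0.
  have Epk := ins_pk Auv; have Elr := ins_lr Auv; have Erl := ins_rl Auv.
  have Epw := pkD_cat u y0 v; rewrite Euv in Epw.
  rewrite Euv in Elr Erl.
  have Sz : size (u ++ n :: y0 :: v) = n.+1 by rewrite size_cat /= -Sw -Euv size_cat /=; lia.
  rewrite Hu (negbTE Hu) /= in Epk Elr Erl.
  rewrite /Lw Sz Elr Erl Epk Sw !addn0.
  case H1 : (lastpk u y0); case H2 : (headpk (last 0 u) (y0 :: v)) => //.
  - by have := ltn_trans (headpk_lt H2) (lastpk_lt H1); rewrite ltnn.
  - rewrite Hu H1 H2 /= in Epw.
    have -> : (pkD u + 1 + pkD (y0 :: v) = pkD w)%N by rewrite Epw addn0.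
    have -> : (n.+1 - 2 * pkD w - 1 = (n - 2 * pkD w - 1).+1)%N by lia.
    by rewrite /= exprS; ring.
  - rewrite Hu H1 H2 /= in Epw.
    have -> : (pkD u + 1 + pkD (y0 :: v) = pkD w)%N by rewrite Epw addn0.
    have -> : (n.+1 - 2 * pkD w - 1 = (n - 2 * pkD w - 1).+1)%N by lia.
    by rewrite /= exprS; ring.
  - rewrite Hu H1 H2 /= in Epw.
    have -> : (pkD u + 1 + pkD (y0 :: v) = (pkD w).+1)%N by rewrite Epw !addn0 addnAC addn1.
    have -> : (n.+1 - 2 * (pkD w).+1 - 1 = n - 2 * pkD w - 2)%N by lia.
    by [].
have Aw' : all (fun z => z < n)%N ([::] ++ w) by [].
have Ef : Lw x y h a b ([::] ++ n :: w) = h * a * Lw x y h a b w.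
  rewrite /Lw (ins_pk Aw') (ins_lr Aw') (ins_rl Aw') /= Sw.
  rewrite (negbTE Hw0) !addn0 add0n.
  have -> : (n.+1 - 2 * pkD w - 1 = (n - 2 * pkD w - 1).+1)%N by lia.
  have -> : (lrD w + 1 - 1 = (lrD w - 1).+1)%N by lia.
  by rewrite !exprS; ring.
have Aw'' : all (fun z => z < n)%N (w ++ [::]) by rewrite cats0.
have Ee : Lw x y h a b (w ++ [:: n]) = h * b * Lw x y h a b w.
  rewrite /Lw (ins_pk Aw'') (ins_lr Aw'') (ins_rl Aw'') !cats0 size_cat /= Sw.
  rewrite (negbTE Hw0) andbF !addn0 addn1.
  have -> : (n.+1 - 2 * pkD w - 1 = (n - 2 * pkD w - 1).+1)%N by lia.
  have -> : (rlD w + 1 - 1 = (rlD w - 1).+1)%N by lia.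
  by rewrite !exprS; ring.
rewrite isum_if nsum_pk Sw Ef Ee /=; ring.
Qed.

Lemma slotR n w (x y c : R) : w \in Pn n -> (0 < n)%N ->
  \sum_(k <- iota 0 n.+1) Rw x y c (take k w ++ n :: drop k w) =
  (x + y) * c * Rw x y c w + (desD w)%:R * (y * Rw x y c w) +
  (n.-1 - desD w)%:R * (x * Rw x y c w).
Proof.
move=> Hw n0; have [Uw Aw Sw] := Pn_prop Hw.
have Hw0 : w != [::] by rewrite -size_eq0 Sw -lt0n.
have Hd : (desD w <= n.-1)%N.
  by rewrite -jdes -Sw; apply: nsum_le.
have Hlr := lrD_gt0 Hw0; have Hrl := rlD_gt0 Hw0.
rewrite -[in iota 0 n.+1]Sw (isum_all _ (fun u v => Rw x y c (u ++ n :: v)) Hw0).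
rewrite (@isum_ext _ _ _ _ (fun u v => if (head 0 v < last 0 u)%N
                                     then y * Rw x y c w else x * Rw x y c w) w); last first.
  move=> u v Hu Hv Euv.
  have Auv : all (fun z => z < n)%N (u ++ v) by rewrite Euv.
  case: v Hv Euv Auv => // y0 v _ Euv Auv; rewrite -[head 0 (y0 :: v)]/y0.
  have Ed := ins_des Auv; have Elr := ins_lr Auv; have Erl := ins_rl Auv.
  have Edw := desD_cat u y0 v; rewrite Euv Hu /= in Edw.
  rewrite Euv in Elr Erl.
  have Sz : size (u ++ n :: y0 :: v) = n.+1 by rewrite size_cat /= -Sw -Euv size_cat /=; lia.
  rewrite (negbTE Hu) /= in Ed Elr Erl.
  rewrite /Rw Sz Elr Erl Ed Sw !addn0.
  case H1 : (y0 < last 0 u)%N.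
  - rewrite H1 in Edw.
    have -> : (desD u + 1 + desD (y0 :: v) = desD w)%N by rewrite Edw.
    have -> : (n.+1 - desD w - 1 = (n - desD w - 1).+1)%N by lia.
    by rewrite exprS; ring.
  - rewrite H1 addn0 in Edw.
    have -> : (desD u + 1 + desD (y0 :: v) = (desD w).+1)%N by rewrite Edw addnAC addn1.
    have -> : (n.+1 - (desD w).+1 - 1 = n - desD w - 1)%N by lia.
    by rewrite exprS; ring.
have Aw' : all (fun z => z < n)%N ([::] ++ w) by [].
have Ef : Rw x y c ([::] ++ n :: w) = x * c * Rw x y c w.
  rewrite /Rw (ins_des Aw') (ins_lr Aw') (ins_rl Aw') /= Sw.
  rewrite Hw0 (negbTE Hw0) !addn0 add0n.
  have -> : (n.+1 - (1 + desD w) - 1 = n - desD w - 1)%N by lia.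
  have -> : (lrD w + 1 + rlD w - 2 = (lrD w + rlD w - 2).+1)%N by lia.
  by rewrite add1n !exprS; ring.
have Aw'' : all (fun z => z < n)%N (w ++ [::]) by rewrite cats0.
have Ee : Rw x y c (w ++ [:: n]) = y * c * Rw x y c w.
  rewrite /Rw (ins_des Aw'') (ins_lr Aw'') (ins_rl Aw'') !cats0 size_cat /= Sw.
  rewrite (negbTE Hw0) !addn0 addn1.
  have -> : (n.+1 - desD w - 1 = (n - desD w - 1).+1)%N by lia.
  have -> : (lrD w + (rlD w + 1) - 2 = (lrD w + rlD w - 2).+1)%N by lia.
  by rewrite !exprS; ring.
rewrite isum_if jdes Sw Ef Ee /=; ring.
Qed.
End Slots.

Import GRing.Theory Num.Theory.
Local Open Scope ring_scope.

Section Poly.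
Variable R : numFieldType.

Lemma poly_ext (p q : {poly R}) : (forall t, p.[t] = q.[t]) -> p = q.
Proof.
move=> H; apply/eqP; rewrite -subr_eq0; apply/eqP.
apply: (@roots_geq_poly_eq0 _ _ [seq i%:R | i <- iota 0 (size (p - q))]).
- by apply/allP => z _; rewrite /root hornerD hornerN H subrr.
- by rewrite map_inj_uniq ?iota_uniq // => i j /eqP; rewrite eqr_nat => /eqP.
- by rewrite size_map size_iota.
Qed.

Definition PL (x y h a b : R) (w : seq nat) : {poly R} :=
  (('X + x%:P) * ('X + y%:P)) ^+ pkD w * ('X + h%:P) ^+ (size w - 2 * pkD w - 1) *
  (a ^+ (lrD w - 1) * b ^+ (rlD w - 1))%:P.
Definition PR (x y c : R) (w : seq nat) : {poly R} :=
  ('X + x%:P) ^+ desD w * ('X + y%:P) ^+ (size w - desD w - 1) *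
  (c ^+ (lrD w + rlD w - 2))%:P.

Lemma PL_eval x y h a b w t : (PL x y h a b w).[t] = Lw (x + t) (y + t) (h + t) a b w.
Proof. by rewrite /PL /Lw !hornerE !(addrC t). Qed.

Lemma PR_eval x y c w t : (PR x y c w).[t] = Rw (x + t) (y + t) c w.
Proof. by rewrite /PR /Rw !hornerE !(addrC t). Qed.

Lemma PL_deriv x y h a b w n : size w = n -> x + y = h *+ 2 ->
  x * y * (PL x y h a b w)^`().[0] =
  (2 * pkD w)%:R * (h * Lw x y h a b w) +
  (n.-1 - 2 * pkD w)%:R * ((x * y) ^+ (pkD w).+1 * h ^+ (n - 2 * pkD w - 2) *
                            a ^+ (lrD w - 1) * b ^+ (rlD w - 1)).
Proof.
move=> Sw Exy; rewrite /PL /Lw Sw !derivM !deriv_exp !derivM !derivD derivX !derivC.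
rewrite !(hornerE, hornerMn) /= addr0.
have -> : (n.-1 - 2 * pkD w = n - 2 * pkD w - 1)%N by lia.
have -> : (n - 2 * pkD w - 2 = (n - 2 * pkD w - 1).-1)%N by lia.
move: (n - 2 * pkD w - 1)%N => k.
have Eyx : y + x = h *+ 2 by rewrite addrC.
rewrite Eyx.
case: (pkD w) => [|p]; case: k => [|k] /=; rewrite ?mulr0n ?mul0r ?muln0 ?mul0n; try ring.
all: rewrite !exprS; ring.
Qed.

Lemma PR_deriv x y c w n : size w = n ->
  x * y * (PR x y c w)^`().[0] =
  (desD w)%:R * (y * Rw x y c w) + (n.-1 - desD w)%:R * (x * Rw x y c w).
Proof.
move=> Sw; rewrite /PR /Rw Sw !derivM !deriv_exp !derivD derivX !derivC.
rewrite !(hornerE, hornerMn) /=.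
have -> : (n.-1 - desD w = n - desD w - 1)%N by lia.
move: (n - desD w - 1)%N => k.
case: (desD w) => [|d]; case: k => [|k] /=; rewrite ?mulr0n ?mul0r ?muln0 ?mul0n; try ring.
all: rewrite !exprS; ring.
Qed.
End Poly.

Import GRing.Theory Num.Theory.
Local Open Scope ring_scope.

Section Main.
Variable R : numFieldType.

Lemma two_neq0 : (2%:R : R) != 0.
Proof. by rewrite pnatr_eq0. Qed.

Lemma main_ind n : (0 < n)%N -> forall x y a b : R,
  \sum_(w <- Pn n) Lw x y ((x + y) / 2%:R) a b w =
  \sum_(w <- Pn n) Rw x y ((a + b) / 2%:R) w.
Proof.
elim: n => // n IH _; case: n IH => [|m] IH.
  move=> x y a b; have -> : Pn 1 = [:: [:: 0%N]] by rewrite /Pn /=; reflexivity.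
  rewrite !big_cons !big_nil /Lw /Rw.
  have -> : pkD [:: 0%N] = 0%N by [].
  have -> : desD [:: 0%N] = 0%N by [].
  have -> : lrD [:: 0%N] = 1%N by [].
  have -> : rlD [:: 0%N] = 1%N by [].
  by rewrite /= !expr0 !mulr1.
have m0 : (0 < m.+1)%N by [].
move=> x y a b; set h := (x + y) / 2%:R; set c := (a + b) / 2%:R.
have Exy : x + y = h *+ 2.
  by rewrite /h -mulr_natr divfK // two_neq0.
rewrite [LHS]sum_Pn_rec [RHS]sum_Pn_rec.
rewrite (eq_big_seq (fun w => h * (a + b) * Lw x y h a b w +
   x * y * (PL x y h a b w)^`().[0])); last first.
  move=> w Hw; cbv beta; rewrite slotL // -addrA; congr (_ + _).
  by have [_ _ Sw] := Pn_prop Hw; rewrite (PL_deriv a b Sw Exy).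
rewrite [RHS](eq_big_seq (fun w => (x + y) * c * Rw x y c w +
   x * y * (PR x y c w)^`().[0])); last first.
  move=> w Hw; cbv beta; rewrite slotR // -addrA; congr (_ + _).
  by have [_ _ Sw] := Pn_prop Hw; rewrite (PR_deriv x y c Sw).
rewrite !big_split /= -!mulr_sumr IH //.
have EP : \sum_(w <- Pn m.+1) PL x y h a b w = \sum_(w <- Pn m.+1) PR x y c w.
  apply: poly_ext => t; rewrite !horner_sum.
  under eq_bigr => w _ do rewrite PL_eval.
  under [RHS]eq_bigr => w _ do rewrite PR_eval.
  have -> : h + t = ((x + t) + (y + t)) / 2%:R.
    by rewrite /h; field.
  exact: IH.
rewrite -!horner_sum -!raddf_sum EP.
by congr (_ + _); rewrite /h /c; ring.
Qed.
End Main.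

Import GRing.Theory Num.Theory.
Local Open Scope ring_scope.

Lemma des_eq n (s : 'S_n) : des s = desD (pword s).
Proof. by rewrite /desD size_pword. Qed.
Lemma peak_eq n (s : 'S_n) : peak s = pkD (pword s).
Proof. by rewrite /pkD size_pword. Qed.
Lemma LR_eq n (s : 'S_n) : LRmin s = lrD (pword s).
Proof. by rewrite /lrD size_pword. Qed.
Lemma RL_eq n (s : 'S_n) : RLmin s = rlD (pword s).
Proof. by rewrite /rlD size_pword. Qed.

Theorem theorem1p9 (R : numFieldType) (n : nat) (hn : (1 <= n)%N)
    (x y a b : R) :
  \sum_(s : 'S_n)
     (x * y) ^+ peak s * ((x + y) / 2%:R) ^+ (n - 2 * peak s - 1)
       * a ^+ (LRmin s - 1) * b ^+ (RLmin s - 1)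
  = \sum_(s : 'S_n)
     x ^+ des s * y ^+ (n - des s - 1)
       * ((a + b) / 2%:R) ^+ (LRmin s + RLmin s - 2).
Proof.
have -> : \sum_(s : 'S_n)
     (x * y) ^+ peak s * ((x + y) / 2%:R) ^+ (n - 2 * peak s - 1)
       * a ^+ (LRmin s - 1) * b ^+ (RLmin s - 1) =
   \sum_(s : 'S_n) Lw x y ((x + y) / 2%:R) a b (pword s).
  by apply: eq_bigr => s _; rewrite /Lw size_pword peak_eq LR_eq RL_eq.
have -> : \sum_(s : 'S_n)
     x ^+ des s * y ^+ (n - des s - 1)
       * ((a + b) / 2%:R) ^+ (LRmin s + RLmin s - 2) =
   \sum_(s : 'S_n) Rw x y ((a + b) / 2%:R) (pword s).
  by apply: eq_bigr => s _; rewrite /Rw size_pword des_eq LR_eq RL_eq.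
by rewrite !sum_Sn main_ind.
Qed.
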